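(* Assume $\mu_1>\mu_a$ for all $a\in\{2,\dots,K\}$ and $c_1,\dots,c_K>0$. Let $(x_2^*,\dots,x_K^* )\in[0,\infty)^{K-1}$ be a maximizer of \[ (x_2,\dots,x_K)\mapsto\frac{\min_{a\neq1}g_a(x_a)}{c_1+c_2x_2+\cdots+c_Kx_K}. \] Then $g_a(x_a^* )=g_b(x_b^* )$ for all $a,b\in\{2,\dots,K\}$.
   Context: Rewards belong to a one-parameter natural exponential family parametrized by the mean; $d(\mu,\mu')$ is the KL divergence between members with means $\mu,\mu'$. For $\alpha\in[0,1]$, $I_\alpha(x,y)=\alpha\,d(x,\alpha x+(1-\alpha)y)+(1-\alpha)\,d(y,\alpha x+(1-\alpha)y)$. For $a\in\{2,\dots,K\}$ and $x\ge0$, $g_a(x)=(1+x)I_{1/(1+x)}(\mu_1,\mu_a)$; $g_a$ is a continuous strictly increasing bijection from $[0,\infty)$ onto $[0,d(\mu_1,\mu_a))$. *)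

(* Defs.v *)
From HB Require Import structures.
From mathcomp Require Import all_boot all_order all_algebra.
From mathcomp Require Import all_classical all_reals all_analysis.
Set Implicit Arguments. Unset Strict Implicit. Unset Printing Implicit Defensive.
Import Order.TTheory GRing.Theory Num.Theory.
Local Open Scope ring_scope.

Section Defs.
Variable R : realType.

Definition Ialpha (d : R -> R -> R) (alpha x y : R) : R :=
  alpha * d x (alpha * x + (1 - alpha) * y)
  + (1 - alpha) * d y (alpha * x + (1 - alpha) * y).

Definition gfun (d : R -> R -> R) (mu1 mua : R) (x : R) : R :=
  (1 + x) * Ialpha d (1 / (1 + x)) mu1 mua.

(* arms are indexed by naturals 1..K; arm 1 is the optimal one.
   min_{a in {2..K}} g_a(x_a), for K >= 2 (the seed g_2(x_2) lies in the range,
   so this is the true minimum). *)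
Definition gmin (d : R -> R -> R) (mu : nat -> R) (K : nat) (x : nat -> R) : R :=
  \big[Num.min/gfun d (mu 1%N) (mu 2%N) (x 2%N)]_(2 <= a < K.+1)
     gfun d (mu 1%N) (mu a) (x a).

Definition objective (d : R -> R -> R) (mu c : nat -> R) (K : nat) (x : nat -> R) : R :=
  gmin d mu K x / (c 1%N + \sum_(2 <= a < K.+1) c a * x a).

End Defs.

(* Main.v *)
Require Import Defs.
From HB Require Import structures.
From mathcomp Require Import all_boot all_order all_algebra.
From mathcomp Require Import all_classical all_reals all_analysis.
Import Order.TTheory GRing.Theory Num.Theory numFieldNormedType.Exports.
Local Open Scope ring_scope.
Local Open Scope classical_set_scope.


Lemma gmin_ge (R : realType) (d : R -> R -> R) (mu : nat -> R) (K : nat) (x : nat -> R) (P : R -> Prop) :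
  (2 <= K)%N -> (forall u v, P u -> P v -> P (Num.min u v)) ->
  (forall a, (2 <= a <= K)%N -> P (gfun d (mu 1%N) (mu a) (x a))) ->
  P (gmin d mu K x).
Proof.
move=> hK hmin hF; rewrite /gmin big_seq.
apply: (big_ind P); first by apply: hF; rewrite leqnn.
- exact: hmin.
- by move=> i; rewrite mem_index_iota ltnS => hi; apply: hF.
Qed.

Lemma gmin_le (R : realType) (d : R -> R -> R) (mu : nat -> R) (K : nat) (x : nat -> R) a :
  (2 <= a <= K)%N -> gmin d mu K x <= gfun d (mu 1%N) (mu a) (x a).
Proof.
move=> ha; rewrite /gmin.
have : a \in index_iota 2 K.+1 by rewrite mem_index_iota ltnS.
elim: (index_iota 2 K.+1) => [//|i s IH]; rewrite inE big_cons ge_min.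
case/orP => [/eqP -> | /IH ->]; last by rewrite orbT.
by rewrite lexx.
Qed.

Lemma den_pos (R : realType) (c : nat -> R) (K : nat) (x : nat -> R) :
  (1 <= K)%N ->
  (forall a : nat, (1 <= a <= K)%N -> 0 < c a) ->
  (forall a : nat, (2 <= a <= K)%N -> 0 <= x a) ->
  0 < c 1%N + \sum_(2 <= a < K.+1) c a * x a.
Proof.
move=> hK hc hx; apply: ltr_wpDr; last first.
  by apply: hc; rewrite hK.
rewrite big_seq; apply: sumr_ge0 => i; rewrite mem_index_iota ltnS => hi.
apply: mulr_ge0; last exact: hx.
apply: ltW; apply: hc; case/andP: hi => h1 h2; rewrite h2 andbT; exact: ltnW.
Qed.
Arguments den_pos {R c K x}.
Arguments gmin_le {R d mu K x a}.
Arguments gmin_ge {R d mu K x P}.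

Theorem lemma2 (R : realType) (d : R -> R -> R) (K : nat) (mu c : nat -> R)
  (hK : (2 <= K)%N)
  (hmu : forall a : nat, (2 <= a <= K)%N -> mu a < mu 1%N)
  (hc : forall a : nat, (1 <= a <= K)%N -> 0 < c a)
  (* standing facts about g_a from the context (d = KL divergence of the NEF) *)
  (hg_cont : forall a : nat, (2 <= a <= K)%N ->
     {within [set x : R | 0 <= x], continuous (gfun d (mu 1%N) (mu a))})
  (hg_incr : forall a : nat, (2 <= a <= K)%N -> forall x y : R,
     0 <= x -> x < y -> gfun d (mu 1%N) (mu a) x < gfun d (mu 1%N) (mu a) y)
  (hg_range : forall a : nat, (2 <= a <= K)%N -> forall x : R,
     0 <= x -> 0 <= gfun d (mu 1%N) (mu a) x < d (mu 1%N) (mu a))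
  (hg_onto : forall a : nat, (2 <= a <= K)%N -> forall y : R,
     0 <= y < d (mu 1%N) (mu a) -> exists2 x : R, 0 <= x & gfun d (mu 1%N) (mu a) x = y)
  (xs : nat -> R)
  (hxs : forall a : nat, (2 <= a <= K)%N -> 0 <= xs a)
  (hmax : forall y : nat -> R, (forall a : nat, (2 <= a <= K)%N -> 0 <= y a) ->
     objective d mu c K y <= objective d mu c K xs) :
  forall a b : nat, (2 <= a <= K)%N -> (2 <= b <= K)%N ->
    gfun d (mu 1%N) (mu a) (xs a) = gfun d (mu 1%N) (mu b) (xs b).
Proof.
have hK1 : (1 <= K)%N by exact: ltnW.
set g := fun a x => gfun d (mu 1%N) (mu a) x.
set m := gmin d mu K xs.
have Dxs := den_pos hK1 hc hxs.
have hm0 : 0 <= m.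
  apply: (gmin_ge (P := fun v => 0 <= v)) => //.
    by move=> u v hu hv; rewrite le_min hu hv.
  by move=> a ha; case/andP: (hg_range a ha (xs a) (hxs a ha)).
have hm : 0 < m.
  rewrite lt_neqAle hm0 andbT; apply/negP => /eqP hm.
  have h1 : forall a : nat, (2 <= a <= K)%N -> 0 <= (fun _ : nat => 1 : R) a by move=> *; exact: ler01.
  have := hmax _ h1; rewrite {2}/objective -/m -hm mul0r.
  apply/negP; rewrite -ltNge /objective; apply: divr_gt0; last exact: den_pos.
  apply: (gmin_ge (P := fun v => 0 < v)) => //.
    by move=> u v hu hv; rewrite lt_min hu hv.
  move=> a ha; case/andP: (hg_range a ha 0 (lexx _)) => h0 _.
  apply: le_lt_trans h0 _; exact: hg_incr ha _ _ (lexx _) ltr01.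
suff key : forall b, (2 <= b <= K)%N -> g b (xs b) = m.
  by move=> a b ha hb; rewrite -/(g a _) -/(g b _) !key.
move=> b hb; apply/eqP; rewrite eq_le gmin_le // andbT leNgt; apply/negP => hlt.
have [yb hyb0 hybm] : exists2 x : R, 0 <= x & g b x = m.
  apply: hg_onto => //; rewrite hm0 /=.
  by apply: lt_trans hlt _; case/andP: (hg_range b hb (xs b) (hxs b hb)).
have hyb : yb < xs b.
  rewrite ltNge; apply/negP => hle.
  move: hle; rewrite le_eqVlt => /orP [/eqP e | hl].
    by move: hlt; rewrite e hybm ltxx.
  have := hg_incr b hb _ _ (hxs b hb) hl; rewrite -/(g b _) -/(g b yb) hybm.
  by move=> h; move: (lt_trans h hlt); rewrite ltxx.
set y := fun i => if i == b then yb else xs i.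
have hy : forall a : nat, (2 <= a <= K)%N -> 0 <= y a.
  by move=> a ha; rewrite /y; case: eqP => _ //; exact: hxs.
have := hmax _ hy; apply/negP; rewrite -ltNge.
have Dy := den_pos hK1 hc hy.
have hbin : b \in index_iota 2 K.+1 by rewrite mem_index_iota ltnS.
have hD : c 1%N + \sum_(2 <= a < K.+1) c a * y a <
          c 1%N + \sum_(2 <= a < K.+1) c a * xs a.
  rewrite ltrD2l !(bigD1_seq b) ?iota_uniq // /y eqxx.
  apply: ltr_leD.
    rewrite ltr_pM2l //; apply: hc; case/andP: hb => h1 h2; rewrite h2 andbT; exact: ltnW.
  by rewrite le_eqVlt; apply/orP; left; apply/eqP; apply: eq_bigr => i /negbTE ->.
have hgy : m <= gmin d mu K y.
  apply: (gmin_ge (P := fun v => m <= v)) => //.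
    by move=> u v hu hv; rewrite le_min hu hv.
  move=> a ha; rewrite /y; case: eqP => [-> | _].
    by rewrite -/(g b yb) hybm.
  exact: gmin_le.
rewrite /objective -/m.
apply: (@lt_le_trans _ _ (m / (c 1%N + \sum_(2 <= a < K.+1) c a * y a))).
  rewrite ltr_pM2l // ltf_pV2 ?posrE //.
by apply: ler_wpM2r => //; rewrite invr_ge0 ltW.
Qed.
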